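(* Let $S \geq 1$ and, for $i = 1,\dots,S$, let $\boldsymbol{M}_i \in \mathbb{R}^{m_i \times m_i}$ be symmetric positive definite, let $\boldsymbol{K}_i \in \mathbb{R}^{m_i \times m_i}$ be symmetric positive semidefinite, and let $\boldsymbol{C}_i \in \mathbb{R}^{p \times m_i}$ be signed Boolean matrices such that $[\boldsymbol{C}_1 \ \cdots \ \boldsymbol{C}_S]$ has full row rank $p$. Let $0 < \gamma \leq 1$ and $\Delta t > 0$, and if $\gamma < 1/2$ assume in addition that $\Delta t \, (1-2\gamma)\, \omega_i^{\max} < 2$ for every $i$, where $\omega_i^{\max}$ is the largest eigenvalue of the generalized eigenvalue problem $\boldsymbol{K}_i \boldsymbol{\phi} = \omega \boldsymbol{M}_i \boldsymbol{\phi}$. Suppose that vectors $\boldsymbol{d}_i^{(n)} \in \mathbb{R}^{m_i}$ ($n \geq 0$), $\boldsymbol{v}_i^{(n+\gamma)} \in \mathbb{R}^{m_i}$ ($n\ge0$) and $\boldsymbol{\lambda}^{(n+\gamma)} \in \mathbb{R}^p$ ($n \ge 0$) satisfy, for all $n \geq 0$ and all $i$ (the modified $\boldsymbol{d}$-continuity method with zero external forcing): $\boldsymbol{M}_i \boldsymbol{v}_i^{(n+\gamma)} + \boldsymbol{K}_i\left((1-\gamma)\boldsymbol{d}_i^{(n)} + \gamma \boldsymbol{d}_i^{(n+1)}\right) = \boldsymbol{C}_i^{\mathrm{T}} \boldsymbol{\lambda}^{(n+\gamma)}$, $\boldsymbol{d}_i^{(n+1)} = \boldsymbol{d}_i^{(n)}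 + \Delta t\, \boldsymbol{v}_i^{(n+\gamma)}$, and $\sum_{i=1}^S \boldsymbol{C}_i \boldsymbol{d}_i^{(n+1)} = \boldsymbol{0}$. Define, for $n \geq 0$, $\boldsymbol{v}_i^{(n+1)} := \gamma \boldsymbol{v}_i^{(n+\gamma)} + (1-\gamma)\boldsymbol{v}_i^{(n+1+\gamma)}$ and $\boldsymbol{\lambda}^{(n+1)} := \gamma \boldsymbol{\lambda}^{(n+\gamma)} + (1-\gamma)\boldsymbol{\lambda}^{(n+1+\gamma)}$. Then the sequences $(\boldsymbol{d}_i^{(n)})_n$, $(\boldsymbol{v}_i^{(n+\gamma)})_n$, $(\boldsymbol{\lambda}^{(n+\gamma)})_n$, $(\boldsymbol{v}_i^{(n+1)})_n$ and $(\boldsymbol{\lambda}^{(n+1)})_n$ are all bounded.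
   Context: A signed Boolean matrix is a matrix whose entries are in $\{-1,0,+1\}$ and each of whose rows has at most one nonzero entry. A sequence of vectors is bounded if there is a constant $C$ independent of $n$ with $\|\boldsymbol{x}^{(n)}\| < C$ for all $n$. The condition on $\Delta t$ for $\gamma<1/2$ is that $\Delta t$ be smaller than the critical time step $2/(\omega_i^{\max}(1-2\gamma))$ of each unconstrained subdomain (no restriction when $\omega_i^{\max}=0$ or $\gamma \ge 1/2$). *)

(* Defs.v *)
From HB Require Import structures.
From mathcomp Require Import all_boot all_order all_algebra.
From mathcomp Require Import reals.
Set Implicit Arguments. Unset Strict Implicit. Unset Printing Implicit Defensive.
Import Order.TTheory GRing.Theory Num.Theory.
Local Open Scope ring_scope.

Section Defs.
Variable R : realType.

Definition sym_mx (k : nat) (A : 'M[R]_k) : Prop := A^T = A.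

Definition posdef_mx (k : nat) (A : 'M[R]_k) : Prop :=
  sym_mx A /\ forall x : 'cV[R]_k, x != 0 -> 0 < (x^T *m A *m x) 0 0.

Definition possemidef_mx (k : nat) (A : 'M[R]_k) : Prop :=
  sym_mx A /\ forall x : 'cV[R]_k, 0 <= (x^T *m A *m x) 0 0.

Definition signed_boolean_mx (p k : nat) (C : 'M[R]_(p, k)) : Prop :=
  (forall i j, C i j = 0 \/ C i j = 1 \/ C i j = -1) /\
  (forall i j j', C i j != 0 -> C i j' != 0 -> j = j').

Definition gen_eigenvalue (k : nat) (K M : 'M[R]_k) (w : R) : Prop :=
  exists phi : 'cV[R]_k, phi != 0 /\ K *m phi = w *: (M *m phi).

Definition max_gen_eigenvalue (k : nat) (K M : 'M[R]_k) (w : R) : Prop :=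
  gen_eigenvalue K M w /\ forall w', gen_eigenvalue K M w' -> w' <= w.

(* bounded sequence of vectors (sup-norm; all norms on R^k are equivalent) *)
Definition bounded_seq (k : nat) (x : nat -> 'cV[R]_k) : Prop :=
  exists C : R, forall n (j : 'I_k), `|x n j 0| < C.

End Defs.

(* Main.v *)
Require Import Defs.
From HB Require Import structures.
From mathcomp Require Import all_boot all_order all_algebra.
From mathcomp Require Import reals.
From mathcomp Require Import all_classical all_analysis.
From mathcomp Require Import ring lra.
Import Order.TTheory GRing.Theory Num.Theory.
Import numFieldNormedType.Exports.
Set Implicit Arguments. Unset Strict Implicit. Unset Printing Implicit Defensive.
Local Open Scope ring_scope.

Definition qf (R : realType) k (A : 'M[R]_k) (x y : 'cV[R]_k) : R :=
  (x^T *m A *m y) 0 0.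

Section Forms.
Variables (R : realType) (k : nat).
Implicit Types (A B : 'M[R]_k) (x y z : 'cV[R]_k).

Lemma qfDl A x y z : qf A (x + y) z = qf A x z + qf A y z.
Proof. by rewrite /qf linearD /= !mulmxDl mxE. Qed.
Lemma qfDr A x y z : qf A x (y + z) = qf A x y + qf A x z.
Proof. by rewrite /qf mulmxDr mxE. Qed.
Lemma qfZl A c x y : qf A (c *: x) y = c * qf A x y.
Proof. by rewrite /qf linearZ /= -!scalemxAl mxE. Qed.
Lemma qfZr A c x y : qf A x (c *: y) = c * qf A x y.
Proof. by rewrite /qf -!scalemxAr mxE. Qed.
Lemma qfNl A x y : qf A (- x) y = - qf A x y.
Proof. by rewrite -scaleN1r qfZl mulN1r. Qed.
Lemma qfNr A x y : qf A x (- y) = - qf A x y.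
Proof. by rewrite -scaleN1r qfZr mulN1r. Qed.
Lemma qfBl A x y z : qf A (x - y) z = qf A x z - qf A y z.
Proof. by rewrite qfDl qfNl. Qed.
Lemma qfBr A x y z : qf A x (y - z) = qf A x y - qf A x z.
Proof. by rewrite qfDr qfNr. Qed.
Lemma qfDm A B x y : qf (A + B) x y = qf A x y + qf B x y.
Proof. by rewrite /qf mulmxDr mulmxDl mxE. Qed.
Lemma qfZm c A x y : qf (c *: A) x y = c * qf A x y.
Proof. by rewrite /qf -scalemxAr -scalemxAl mxE. Qed.
Lemma qfNm A x y : qf (- A) x y = - qf A x y.
Proof. by rewrite -scaleN1r qfZm mulN1r. Qed.
Lemma qf_sym A x y : sym_mx A -> qf A x y = qf A y x.
Proof.
move=> sA; rewrite /qf.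
have -> : (x^T *m A *m y) 0 0 = ((x^T *m A *m y)^T) 0 0 by rewrite !mxE.
by rewrite !trmx_mul trmxK sA mulmxA.
Qed.
Lemma qf_mulr A x y : qf A x y = (x^T *m (A *m y)) 0 0.
Proof. by rewrite /qf mulmxA. Qed.

Lemma qf_quad A x y t : sym_mx A ->
  qf A (x + t *: y) (x + t *: y) =
  qf A x x + 2 * t * qf A x y + t ^+ 2 * qf A y y.
Proof.
move=> sA; rewrite qfDl !qfDr !qfZl !qfZr (qf_sym x y sA).
by rewrite expr2; ring.
Qed.
End Forms.

Lemma quad_cs (R : realType) (a b c : R) : 0 <= c ->
  (forall t, 0 <= a + 2 * b * t + t ^+ 2 * c) -> b ^+ 2 <= a * c.
Proof.
move=> c0 H; have [cz|cp] := eqVneq c 0.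
  rewrite cz mulr0; have [bz|bn] := eqVneq b 0; first by rewrite bz expr0n.
  have := H (- (a + 1) / (2 * b)); rewrite cz mulr0 addr0.
  have -> : 2 * b * (- (a + 1) / (2 * b)) = - (a + 1) by field.
  lra.
have cp' : 0 < c by rewrite lt_def cp c0.
have := H (- b / c).
have -> : a + 2 * b * (- b / c) + (- b / c) ^+ 2 * c = a - b ^+ 2 / c.
  by field.
rewrite subr_ge0 ler_pdivrMr //.
Qed.

Section PSD.
Variables (R : realType) (k : nat).
Implicit Types (A B : 'M[R]_k) (x y z : 'cV[R]_k).

Lemma psd_cs A x y : sym_mx A -> (forall z, 0 <= qf A z z) ->
  qf A x y ^+ 2 <= qf A x x * qf A y y.
Proof.
move=> sA pA; apply: quad_cs => // t; have := pA (x + t *: y).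
by rewrite qf_quad // mulrAC.
Qed.

Lemma qf_self_sq z : qf 1%:M z z = \sum_j z j 0 ^+ 2.
Proof.
rewrite /qf mulmx1 mxE; apply: eq_bigr => j _; by rewrite mxE expr2.
Qed.

Lemma psd_ker A x : sym_mx A -> (forall z, 0 <= qf A z z) ->
  qf A x x = 0 -> A *m x = 0.
Proof.
move=> sA pA h; set z := A *m x.
have e : qf A z x = \sum_j z j 0 ^+ 2.
  by rewrite qf_mulr -qf_self_sq /qf mulmx1.
have := psd_cs z x sA pA; rewrite h mulr0 => h2.
have h3 : qf A z x = 0.
  by apply/eqP; rewrite -sqrf_eq0 eq_le h2 sqr_ge0.
rewrite h3 in e.
have hz := psumr_eq0P (fun j _ => sqr_ge0 (z j 0)) (esym e).
apply/matrixP => i j; rewrite !ord1.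
move: (hz i isT) => /eqP; rewrite sqrf_eq0 => /eqP ->.
by rewrite mxE.
Qed.
End PSD.
Lemma qfE (R : realType) k (A : 'M[R]_k) x y :
  qf A x y = \sum_j (\sum_i x i 0 * A i j) * y j 0.
Proof.
rewrite /qf mxE; apply: eq_bigr => j _; rewrite mxE; congr (_ * _).
by apply: eq_bigr => i _; rewrite mxE.
Qed.

Lemma cont_sum (R : realType) (T : topologicalType) (I : eqType) (r : seq I)
   (F : I -> T -> R) :
  (forall i, continuous (F i)) -> continuous (fun u => \sum_(i <- r) F i u).
Proof.
move=> HF; elim: r => [|a r IH].
  have -> : (fun u : T => \sum_(i <- [::]) F i u) = fun=> 0.
    by apply: funext => u; rewrite big_nil.
  by move=> x; apply: cst_continuous.
have -> : (fun u : T => \sum_(i <- a :: r) F i u) = F a + (fun u => \sum_(i <- r) F i u).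
  by apply: funext => u; rewrite big_cons.
by move=> x; apply: continuousD; [apply: HF| apply: IH].
Qed.

Lemma qf_cont (R : realType) k (A : 'M[R]_k) :
  continuous (fun u : 'rV[R]_k => qf A u^T u^T).
Proof.
have -> : (fun u : 'rV[R]_k => qf A u^T u^T) =
   fun u => \sum_(j <- index_enum 'I_k) (\sum_(i <- index_enum 'I_k) u 0 i * A i j) * u 0 j.
  by apply: funext => u; rewrite qfE; apply: eq_bigr => j _; rewrite mxE;
     congr (_ * _); apply: eq_bigr => i _; rewrite mxE.
apply: cont_sum => j x; apply: continuousM; last exact: coord_continuous.
apply: cont_sum => i y; apply: continuousM; first exact: coord_continuous.
exact: cst_continuous.
Qed.

Section Rayleigh.
Local Open Scope classical_set_scope.
Variables (R : realType) (k : nat).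

Lemma qfZZ (A : 'M[R]_k) c x : qf A (c *: x) (c *: x) = c ^+ 2 * qf A x x.
Proof. by rewrite qfZl qfZr mulrA expr2. Qed.

Lemma qf0 (A : 'M[R]_k) : qf A 0 0 = 0.
Proof. by rewrite /qf trmx0 !mul0mx mxE. Qed.

Lemma rayleigh_max (K M : 'M[R]_k) : posdef_mx M -> possemidef_mx K -> (0 < k)%N ->
  exists w, max_gen_eigenvalue K M w /\ forall x, qf K x x <= w * qf M x x.
Proof.
move=> [sM pM] [sK pK] k0.
have Mpos : forall x, x != 0 -> 0 < qf M x x by move=> x /pM.
pose Sph := [set u : 'rV[R]_k | `|u| = 1]%classic.
pose f := fun u : 'rV[R]_k => qf K u^T u^T / qf M u^T u^T.
have Sph_nz : forall u, Sph u -> u^T != 0.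
  move=> u; rewrite /Sph /= => hu; apply/eqP => h0.
  have : u = 0 by rewrite -[u]trmxK h0 trmx0.
  by move=> u0; move: hu; rewrite u0 normr0 => /eqP; rewrite eq_sym oner_eq0.
have normalize : forall u : 'rV[R]_k, u != 0 -> Sph (`|u|^-1 *: u).
  move=> u u0; rewrite /Sph /=. rewrite normrZ ger0_norm ?invr_ge0 // mulVf //.
  by rewrite normr_eq0.
have ne : (Sph !=set0)%classic.
  pose j := Ordinal k0.
  have c0 : (const_mx 1 : 'rV[R]_k) != 0.
    apply/eqP => /matrixP /(_ 0 j); rewrite !mxE => /eqP; by rewrite oner_eq0.
  by exists (`|(const_mx 1 : 'rV[R]_k)|^-1 *: const_mx 1); apply: normalize.
have cpt : compact Sph.
  apply: bounded_closed_compact.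
    rewrite /= /bounded_near; near=> B => u; rewrite /Sph /= => ->; near: B.
    exact: nbhs_pinfty_ge.
  have := @preimage_closed _ _ (@Num.norm _ 'rV[R]_k) [set x : R | x = 1]%classic; apply.
    by move=> u _; apply: norm_continuous.
  exact: closed_eq.
have fc : {within Sph, continuous f}.
  apply: continuous_in_subspaceT => u /set_mem /Sph_nz uz.
  apply: (continuousM (s := fun u => qf K u^T u^T) (t := fun u => (qf M u^T u^T)^-1)).
    exact: qf_cont.
  apply: continuousV; first by rewrite gt_eqF // Mpos.
  exact: qf_cont.
have [c cS cmax] := compact_EVT_max ne cpt fc.
move/set_mem: cS => cS.
set w := f c.
have ray : forall x, qf K x x <= w * qf M x x.
  move=> x; have [->|xn] := eqVneq x 0; first by rewrite !qf0 mulr0.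
  have xTn : x^T != 0 by apply: contraNneq xn => h; rewrite -[x]trmxK h trmx0.
  have := cmax _ (mem_set (normalize _ xTn)).
  rewrite /f linearZ /= trmxK !qfZZ.
  have nz : `|x^T|^-1 ^+ 2 != 0 :> R.
    by rewrite expf_neq0 // invr_eq0 normr_eq0.
  rewrite -mulf_div divff // mul1r ler_pdivrMr ?Mpos //.
have x0n := Sph_nz _ cS.
set x0 := c^T in x0n.
have eq0 : qf K x0 x0 = w * qf M x0 x0.
  by rewrite /w /f divfK // gt_eqF // Mpos.
have sQ : sym_mx (w *: M - K).
  by rewrite /sym_mx linearB /= linearZ /= sM sK.
have pQ : forall z, 0 <= qf (w *: M - K) z z.
  by move=> z; rewrite qfDm qfNm qfZm subr_ge0 ray.
have hQ : qf (w *: M - K) x0 x0 = 0.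
  by rewrite qfDm qfNm qfZm eq0 subrr.
have ker := psd_ker sQ pQ hQ.
exists w; split => //; split.
  exists x0; split => //.
  by move: ker; rewrite mulmxBl -scalemxAl => /eqP; rewrite subr_eq0 => /eqP <-.
move=> w' [phi [phin eph]].
have : qf K phi phi = w' * qf M phi phi.
  by rewrite qf_mulr eph -scalemxAr mxE -qf_mulr.
move=> e; have := ray phi; rewrite e ler_pM2r //; exact: Mpos.
Unshelve. all: end_near.
Qed.
End Rayleigh.
Section Bnd.
Variable R : realType.

Lemma le_lt1 (a b : R) : a <= b -> a < b + 1.
Proof. move=> h; lra. Qed.

Lemma bs_ext k (x y : nat -> 'cV[R]_k) : (forall n, x n = y n) ->
  bounded_seq x -> bounded_seq y.
Proof. by move=> e [C hC]; exists C => n j; rewrite -e. Qed.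

Lemma bs_shift k (x : nat -> 'cV[R]_k) : bounded_seq x -> bounded_seq (fun n => x n.+1).
Proof. by move=> [C hC]; exists C. Qed.

Lemma bs_add k (x y : nat -> 'cV[R]_k) : bounded_seq x -> bounded_seq y ->
  bounded_seq (fun n => x n + y n).
Proof.
move=> [C hC] [D hD]; exists (C + D) => n j; rewrite mxE.
by rewrite (le_lt_trans (ler_normD _ _)) // ltrD.
Qed.

Lemma bs_scale k (c : R) (x : nat -> 'cV[R]_k) : bounded_seq x ->
  bounded_seq (fun n => c *: x n).
Proof.
move=> [C hC]; exists (`|c| * `|C| + 1) => n j; rewrite mxE normrM.
apply: le_lt1.
by apply: ler_wpM2l => //; apply: ltW; apply: (lt_le_trans (hC n j)); apply: ler_norm.
Qed.

Lemma bs_mul k l (A : 'M[R]_(l, k)) (x : nat -> 'cV[R]_k) : bounded_seq x ->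
  bounded_seq (fun n => A *m x n).
Proof.
move=> [C hC]; exists (\sum_i \sum_j `|A i j| * `|C| + 1) => n i; rewrite mxE.
apply: le_lt1.
apply: (le_trans (ler_norm_sum _ _ _)).
apply: (@le_trans _ _ (\sum_j `|A i j| * `|C|)).
  apply: ler_sum => j _; rewrite normrM; apply: ler_wpM2l => //.
  by apply: ltW; apply: (lt_le_trans (hC n j)); apply: ler_norm.
rewrite (bigD1 i) //= lerDl; apply: sumr_ge0 => i' _.
by apply: sumr_ge0 => j _; apply: mulr_ge0.
Qed.

Lemma bs_zero k : bounded_seq (fun _ : nat => (0 : 'cV[R]_k)).
Proof. by exists 1 => n j; rewrite mxE normr0. Qed.

Lemma bs_sum k (I : eqType) (r : seq I) (F : I -> nat -> 'cV[R]_k) :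
  (forall i, bounded_seq (F i)) -> bounded_seq (fun n => \sum_(i <- r) F i n).
Proof.
move=> hF; elim: r => [|a r IH].
  by apply: bs_ext (@bs_zero k) => n; rewrite big_nil.
apply: bs_ext (bs_add (hF a) IH) => n; by rewrite big_cons.
Qed.
End Bnd.

Section PD.
Variables (R : realType) (k : nat).

Lemma pd_unit (M : 'M[R]_k) : posdef_mx M -> M \in unitmx.
Proof.
move=> [sM pM]; rewrite unitmxE unitfE; apply/negP => /det0P [v vn vM].
have vTn : v^T != 0 by apply: contraNneq vn => h; rewrite -[v]trmxK h trmx0.
have := pM _ vTn; by rewrite trmxK vM mul0mx mxE ltxx.
Qed.

Lemma sq_bound (y : R) : `|y| <= 1 + y ^+ 2.
Proof.
have [h|h] := lerP 0 y.
  rewrite ger0_norm //; nra.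
rewrite ltr0_norm //; nra.
Qed.

Lemma bs_form (M : 'M[R]_k) (x : nat -> 'cV[R]_k) (B : R) : posdef_mx M ->
  (forall n, qf M (x n) (x n) <= B) -> bounded_seq x.
Proof.
move=> pdM hB; have [sM pM] := pdM.
have psd : forall z, 0 <= qf M z z.
  move=> z; have [->|zn] := eqVneq z 0; first by rewrite qf0.
  exact/ltW/pM.
pose e (j : 'I_k) : 'cV[R]_k := delta_mx j 0.
have ee : forall j z, qf M (e j) z = (M *m z) j 0.
  move=> j z; rewrite qf_mulr /e mxE (bigD1 j) //= big1 ?addr0.
    by rewrite !mxE !eqxx mul1r.
  by move=> j' /negbTE nj; rewrite !mxE nj mul0r.
have hMx : bounded_seq (fun n => M *m x n).
  exists (\sum_j (1 + `|qf M (e j) (e j) * B|) + 1) => n j.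
  apply: le_lt1; apply: (@le_trans _ _ (1 + `|qf M (e j) (e j) * B|)).
    apply: (le_trans (sq_bound _)); rewrite lerD2l -ee.
    apply: (le_trans (psd_cs _ _ sM psd)); apply: (le_trans _ (ler_norm _)).
    by apply: ler_wpM2l => //.
  rewrite (bigD1 j) //= lerDl; apply: sumr_ge0 => i _.
  by apply: addr_ge0.
apply: bs_ext (bs_mul (invmx M) hMx) => n.
by rewrite mulmxA mulVmx ?mul1mx // pd_unit.
Qed.
End PD.
Lemma energy_scalar (R : realType) (g dt Bs Cs W X Q Rr : R) :
  0 < dt -> 0 <= Cs -> 0 <= Rr -> 0 <= W ->
  Bs + g * Cs + dt * W = 0 -> Cs + dt * X = 0 -> X = Q + g * Rr ->
  X ^+ 2 <= Rr * W ->
  (g < 1/2 -> (1/2 - g) * dt * Rr <= Cs) ->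
  2 * Bs + Cs + Num.max (dt * (1/2 - g)) 0 * (2 * Q + Rr) <= 0.
Proof.
move=> dt0 C0 R0 W0 H1 H2 HX H3 H4.
have eB : Bs = - g * Cs - dt * W by lra.
have eQ : Q = X - g * Rr by lra.
rewrite eB eQ.
have [lt|ge] := ltrP g (1/2).
  have a0 : 0 < 1/2 - g by lra.
  rewrite max_l; last by apply: mulr_ge0; lra.
  have h4 := H4 lt.
  have eC : Cs = - dt * X by lra.
  have hX : (1/2 - g) * Rr <= - X.
    rewrite eC in h4; rewrite -(ler_pM2l dt0); nra.
  have hX2 : (1/2 - g) ^+ 2 * Rr ^+ 2 <= X ^+ 2.
    have h0 : 0 <= (1/2 - g) * Rr by apply: mulr_ge0; lra.
    rewrite -exprMn !expr2; nra.
  have hW : (1/2 - g) ^+ 2 * Rr <= W.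
    have [Rz|Rp] := eqVneq Rr 0.
      by rewrite Rz mulr0.
    have Rp' : 0 < Rr by rewrite lt_def Rp R0.
    rewrite -(ler_pM2l Rp'); apply: (le_trans _ H3); apply: (le_trans _ hX2).
    by rewrite le_eqVlt; apply/orP; left; apply/eqP; ring.
  rewrite eC.
  have -> : 2 * (- g * (- dt * X) - dt * W) + - dt * X +
     dt * (1 / 2 - g) * (2 * (X - g * Rr) + Rr) =
     2 * dt * ((1/2 - g) ^+ 2 * Rr - W) by field.
  rewrite pmulr_rle0 ?subr_le0 //; lra.
rewrite max_r; last by apply: mulr_ge0_le0; lra.
have h1 : 0 <= (g - 1/2) * Cs by apply: mulr_ge0; lra.
have h2 : 0 <= dt * W by apply: mulr_ge0; lra.
rewrite mul0r addr0; lra.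
Qed.

Lemma sum_orth (R : realType) p S (m : 'I_S -> nat) (C : forall i, 'M[R]_(p, m i))
  (x : forall i, 'cV[R]_(m i)) (l : 'cV[R]_p) :
  \sum_i ((x i)^T *m ((C i)^T *m l)) 0 0 = ((\sum_i C i *m x i)^T *m l) 0 0.
Proof.
rewrite raddf_sum mulmx_suml summxE; apply: eq_bigr => i _.
by rewrite mulmxA -trmx_mul.
Qed.

Lemma test_eq (R : realType) p k (M K : 'M[R]_k) (C : 'M[R]_(p, k)) (v w z : 'cV[R]_k)
  (l : 'cV[R]_p) (dt : R) :
  M *m v + K *m w = C^T *m l ->
  qf M z (dt *: v) + dt * qf K z w = dt * (z^T *m (C^T *m l)) 0 0.
Proof.
move=> e; by rewrite qfZr -mulrDr !qf_mulr -e mulmxDr [in RHS]mxE.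
Qed.

Unset Implicit Arguments.
Local Open Scope ring_scope.
Theorem mainTheorem3 (R : realType) (S p : nat) (m : 'I_S -> nat)
  (M K : forall i : 'I_S, 'M[R]_(m i))
  (C : forall i : 'I_S, 'M[R]_(p, m i))
  (gamma dt : R)
  (d : forall i : 'I_S, nat -> 'cV[R]_(m i))
  (vg : forall i : 'I_S, nat -> 'cV[R]_(m i))
  (lg : nat -> 'cV[R]_p) :
  (0 < S)%N ->
  (forall i, posdef_mx (M i)) ->
  (forall i, possemidef_mx (K i)) ->
  (forall i, signed_boolean_mx (C i)) ->
  \rank (\mxrow_(i < S) C i) = p ->
  0 < gamma -> gamma <= 1 -> 0 < dt ->
  (gamma < 1 / 2 -> forall i w, max_gen_eigenvalue (K i) (M i) w ->
      dt * (1 - 2 * gamma) * w < 2) ->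
  (forall i n, M i *m vg i n
                 + K i *m ((1 - gamma) *: d i n + gamma *: d i n.+1)
               = (C i)^T *m lg n) ->
  (forall i n, d i n.+1 = d i n + dt *: vg i n) ->
  (forall n, \sum_(i < S) C i *m d i n.+1 = 0) ->
  (forall i, bounded_seq (d i)) /\
  (forall i, bounded_seq (vg i)) /\
  bounded_seq lg /\
  (forall i, bounded_seq (fun n => gamma *: vg i n + (1 - gamma) *: vg i n.+1)) /\
  bounded_seq (fun n => gamma *: lg n + (1 - gamma) *: lg n.+1).
Proof.
move=> S0 pdM psdK _ rk g0 g1 dt0 cond eqn deq cons.
have symM : forall i, sym_mx (M i) by move=> i; case: (pdM i).
have symK : forall i, sym_mx (K i) by move=> i; case: (psdK i).
have psdKf : forall i x, 0 <= qf (K i) x x by move=> i; case: (psdK i).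
have psdMf : forall i x, 0 <= qf (M i) x x.
  move=> i x; have [->|xn] := eqVneq x 0; first by rewrite qf0.
  by apply/ltW; case: (pdM i) => _; apply.
have ray : forall i, gamma < 1/2 -> forall x,
    (1/2 - gamma) * dt * qf (K i) x x <= qf (M i) x x.
  move=> i lt x; have [m0|mp] := posnP (m i).
    have -> : qf (K i) x x = 0.
      rewrite qfE big1 // => j _; exfalso; case: j => jj hjj; by rewrite m0 in hjj.
    by rewrite mulr0.
  have [w [mw rw]] := rayleigh_max (pdM i) (psdK i) mp.
  have cw := cond lt i w mw.
  have h := rw x; have h1 := psdKf i x; have h2 := psdMf i x.
  have a0 : 0 <= (1/2 - gamma) * dt by apply: mulr_ge0; lra.
  have h3 : (1/2 - gamma) * dt * w <= 1 by nra.
  apply: (le_trans (ler_wpM2l a0 h)).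
  rewrite mulrA -[X in _ <= X]mul1r; apply: ler_wpM2r => //.
pose F n := \sum_i qf (M i) (d i n) (d i n).
pose E n := \sum_i qf (K i) (d i n) (d i n).
pose c := Num.max (dt * (1/2 - gamma)) 0.
have c0 : 0 <= c by rewrite /c le_max lexx orbT.
have E0 : forall n, 0 <= E n by move=> n; apply: sumr_ge0 => i _.
have step : forall n, F n.+2 + c * E n.+2 <= F n.+1 + c * E n.+1.
  move=> n; set k := n.+1.
  pose dl i := dt *: vg i k.
  pose w i := (1 - gamma) *: d i k + gamma *: d i k.+1.
  have hd : forall i, d i k.+1 = d i k + dl i by move=> i; exact: deq.
  have hw : forall i, w i = d i k + gamma *: dl i.
    move=> i; rewrite /w hd scalerDr addrA -scalerDl subrK scale1r //.
  have hdl : forall i, dl i = d i k.+1 - d i k by move=> i; rewrite hd addrC addKr.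
  have cn : \sum_i C i *m d i k = 0 := cons n.
  have cons_dl : \sum_i C i *m dl i = 0.
    under eq_bigr do rewrite hdl mulmxBr.
    by rewrite sumrB (cons k) cn subrr.
  have cons_w : \sum_i C i *m w i = 0.
    under eq_bigr do rewrite /w mulmxDr -!scalemxAr.
    by rewrite big_split /= -!scaler_sumr (cons k) cn !scaler0 addr0.
  have test : forall z : forall i, 'cV[R]_(m i), \sum_i C i *m z i = 0 ->
      \sum_i (qf (M i) (z i) (dl i) + dt * qf (K i) (z i) (w i)) = 0.
    move=> z hz; under eq_bigr => i _ do rewrite /dl /w (test_eq (z i) dt (eqn i k)).
    by rewrite -mulr_sumr sum_orth hz trmx0 mul0mx mxE mulr0.
  have T1 := test w cons_w; have T2 := test dl cons_dl.
  pose Bs := \sum_i qf (M i) (d i k) (dl i).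
  pose Cs := \sum_i qf (M i) (dl i) (dl i).
  pose Q := \sum_i qf (K i) (d i k) (dl i).
  pose Rr := \sum_i qf (K i) (dl i) (dl i).
  pose W := \sum_i qf (K i) (w i) (w i).
  pose X := \sum_i qf (K i) (dl i) (w i).
  have eF : F k.+1 = F k + 2 * Bs + Cs.
    rewrite /F /Bs /Cs mulr_sumr -!big_split; apply: eq_bigr => i _ /=.
    have := qf_quad (d i k) (dl i) 1 (symM i); rewrite scale1r hd => ->.
    by rewrite expr1n; ring.
  have eE : E k.+1 = E k + 2 * Q + Rr.
    rewrite /E /Q /Rr mulr_sumr -!big_split; apply: eq_bigr => i _ /=.
    have := qf_quad (d i k) (dl i) 1 (symK i); rewrite scale1r hd => ->.
    by rewrite expr1n; ring.
  have eT1 : Bs + gamma * Cs + dt * W = 0.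
    rewrite -T1 /Bs /Cs /W mulr_sumr mulr_sumr -!big_split; apply: eq_bigr => i _ /=.
    have -> : qf (M i) (w i) (dl i) = qf (M i) (d i k) (dl i) + gamma * qf (M i) (dl i) (dl i).
      by rewrite hw qfDl qfZl.
    by [].
  have eT2 : Cs + dt * X = 0 by rewrite -T2 big_split /= -mulr_sumr.
  have eX : X = Q + gamma * Rr.
    rewrite /X /Q /Rr mulr_sumr -big_split; apply: eq_bigr => i _ /=.
    by rewrite hw qfDr qfZr (qf_sym _ _ (symK i)).
  have Cs0 : 0 <= Cs by apply: sumr_ge0 => i _.
  have Rr0 : 0 <= Rr by apply: sumr_ge0 => i _.
  have W0 : 0 <= W by apply: sumr_ge0 => i _.
  have CS : X ^+ 2 <= Rr * W.
    apply: quad_cs => // t.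
    have := @sumr_ge0 _ _ (index_enum 'I_S) xpredT
       (fun i => qf (K i) (dl i + t *: w i) (dl i + t *: w i)) (fun i _ => psdKf i _).
    congr (_ <= _).
    under eq_bigr => i _ do rewrite qf_quad //.
    rewrite !big_split /= -!mulr_sumr /Rr /X /W; ring.
  have Rb : gamma < 1/2 -> (1/2 - gamma) * dt * Rr <= Cs.
    by move=> lt; rewrite /Rr mulr_sumr; apply: ler_sum => i _; apply: ray.
  have := energy_scalar dt0 Cs0 Rr0 W0 eT1 eT2 eX CS Rb.
  rewrite eF eE -/c => h.
  rewrite !mulrDr; lra.
have Gk : forall n, F n.+1 + c * E n.+1 <= F 1 + c * E 1.
  elim=> [|n IH] //; exact: le_trans (step n) IH.
pose Bd := Num.max (F 0 + c * E 0) (F 1 + c * E 1).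
have Fb : forall n, F n <= Bd.
  have cE : forall n, F n <= F n + c * E n.
    by move=> n; rewrite lerDl; apply: mulr_ge0.
  case=> [|n]; rewrite /Bd le_max.
    by rewrite cE.
  by rewrite (le_trans (cE _) (Gk n)) orbT.
have db : forall i, bounded_seq (d i).
  move=> i; apply: (bs_form (B := Bd) (pdM i)) => n.
  apply: le_trans (Fb n); rewrite /F (bigD1 i) //= lerDl.
  by apply: sumr_ge0 => j _.
have vb : forall i, bounded_seq (vg i).
  move=> i; apply: bs_ext (bs_scale dt^-1 (bs_add (bs_shift (db i)) (bs_scale (-1) (db i)))).
  move=> n /=; rewrite deq scaleN1r addrC addKr scalerA mulVf ?scale1r //.
  by rewrite gt_eqF.
have yb : forall i, bounded_seq (fun n => (C i)^T *m lg n).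
  move=> i; apply: bs_ext (bs_add (bs_mul (M i) (vb i))
     (bs_mul (K i) (bs_add (bs_scale (1 - gamma) (db i)) (bs_scale gamma (bs_shift (db i)))))).
  by move=> n /=; rewrite eqn.
have lb : bounded_seq lg.
  pose R0 := \mxrow_(i < S) C i.
  have rf : row_free R0 by rewrite /row_free rk.
  pose Xp := pinvmx R0.
  have e1 : R0 *m Xp = 1%:M := mulmxVp rf.
  have eXp : Xp^T = \mxrow_i (submxcol Xp i)^T by rewrite -tr_mxcol submxcolK.
  have el : forall n, lg n = \sum_i (submxcol Xp i)^T *m ((C i)^T *m lg n).
    move=> n.
    rewrite {1}(_ : lg n = (R0 *m Xp)^T *m lg n); last by rewrite e1 trmx1 mul1mx.
    rewrite trmx_mul eXp /R0 tr_mxrow mul_mxrow_mxcol mulmx_suml.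
    by apply: eq_bigr => i _; rewrite mulmxA.
  have hs : bounded_seq (fun n => \sum_(i <- index_enum 'I_S) (submxcol Xp i)^T *m ((C i)^T *m lg n)).
    apply: (@bs_sum _ _ _ (index_enum 'I_S) (fun i n => (submxcol Xp i)^T *m ((C i)^T *m lg n))) => i.
    exact: (bs_mul _ (yb i)).
  apply: bs_ext hs => n; by rewrite [RHS]el.
split => //; split => //; split => //; split.
  move=> i; exact: bs_add (bs_scale _ (vb i)) (bs_scale _ (bs_shift (vb i))).
exact: bs_add (bs_scale _ lb) (bs_scale _ (bs_shift lb)).
Qed.
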